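(* Let $A\subseteq\mathbb{N}$ and $\alpha\ge-1$. For every $x\in[\underline{d}_\alpha(A),\overline{d}_\alpha(A)]$ there is a free ultrafilter $\mathcal{F}$ on $\mathbb{N}$ such that $\mu_\alpha^{\mathcal{F}}(A)=x$.
   Context: $\mathbb{N}=\{1,2,3,\dots\}$. For $\alpha\ge-1$ and $A\subseteq\mathbb{N}$ put $A_\alpha(n)=\sum_{k=1}^n\chi_A(k)k^\alpha$ (so $\mathbb{N}_\alpha(n)=\sum_{k=1}^nk^\alpha$), $\underline{d}_\alpha(A)=\liminf_{n\to\infty}\frac{A_\alpha(n)}{\mathbb{N}_\alpha(n)}$ and $\overline{d}_\alpha(A)=\limsup_{n\to\infty}\frac{A_\alpha(n)}{\mathbb{N}_\alpha(n)}$. For a free ultrafilter $\mathcal{F}$ and a bounded real sequence $(x_n)$, $\mathcal{F}\text{-}\lim x_n$ is the unique real $L$ with $\{n;|x_n-L|<\varepsilon\}\in\mathcal{F}$ for every $\varepsilon>0$. Define $\mu_\alpha^{\mathcal{F}}(A)=\mathcal{F}\text{-}\lim\frac{A_\alpha(n)}{\mathbb{N}_\alpha(n)}$. *)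

(* Defs.v *)
From Stdlib Require Import Reals.
From Coquelicot Require Import Coquelicot.
Open Scope R_scope.

(* A subset A of N = {1,2,...} is represented by a boolean predicate on nat;
   its value at 0 is irrelevant (0 never enters the sums). *)

Fixpoint A_alpha (alpha : R) (A : nat -> bool) (n : nat) : R :=
  match n with
  | O => 0
  | S m => A_alpha alpha A m + (if A (S m) then Rpower (INR (S m)) alpha else 0)
  end.

Definition N_alpha (alpha : R) (n : nat) : R := A_alpha alpha (fun _ => true) n.

(* the ratio A_alpha(n) / N_alpha(n)  (the n = 0 term, 0/0, is irrelevant) *)
Definition dens_ratio (alpha : R) (A : nat -> bool) (n : nat) : R :=
  A_alpha alpha A n / N_alpha alpha n.

Definition lower_dens (alpha : R) (A : nat -> bool) : Rbar :=
  LimInf_seq (dens_ratio alpha A).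
Definition upper_dens (alpha : R) (A : nat -> bool) : Rbar :=
  LimSup_seq (dens_ratio alpha A).

Definition is_ultrafilter (F : (nat -> Prop) -> Prop) : Prop :=
  F (fun _ => True) /\
  ~ F (fun _ => False) /\
  (forall S T : nat -> Prop, F S -> (forall n, S n -> T n) -> F T) /\
  (forall S T : nat -> Prop, F S -> F T -> F (fun n => S n /\ T n)) /\
  (forall S : nat -> Prop, F S \/ F (fun n => ~ S n)).

(* free: contains no singleton (equivalently, the intersection of its members is empty) *)
Definition is_free_ultrafilter (F : (nat -> Prop) -> Prop) : Prop :=
  is_ultrafilter F /\ forall m : nat, ~ F (fun n => n = m).

Definition is_F_lim (F : (nat -> Prop) -> Prop) (x : nat -> R) (L : R) : Prop :=
  forall eps : R, 0 < eps -> F (fun n => Rabs (x n - L) < eps).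

Definition mu_alpha_F_is (alpha : R) (F : (nat -> Prop) -> Prop) (A : nat -> bool) (L : R)
  : Prop := is_F_lim F (dens_ratio alpha A) L.

(* Main.v *)
Require Import Defs.
From Stdlib Require Import Reals Lra Lia Classical.
From Coquelicot Require Import Coquelicot.
Open Scope R_scope.

Lemma Rpower_pos' x a : 0 < Rpower x a.
Proof. unfold Rpower; apply exp_pos. Qed.

Lemma N_S a n : N_alpha a (S n) = N_alpha a n + Rpower (INR (S n)) a.
Proof. reflexivity. Qed.

Lemma A_S a A n : A_alpha a A (S n) = A_alpha a A n + (if A (S n) then Rpower (INR (S n)) a else 0).
Proof. reflexivity. Qed.

Lemma A_le_N a A n : 0 <= A_alpha a A n <= N_alpha a n.
Proof.
  induction n as [|n IH]; [unfold N_alpha; simpl; lra|].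
  rewrite N_S, A_S. pose proof (Rpower_pos' (INR (S n)) a).
  destruct (A (S n)); lra.
Qed.

Lemma N_pos a n : (1 <= n)%nat -> 0 < N_alpha a n.
Proof.
  intros H. destruct n as [|n]; [lia|]. rewrite N_S.
  pose proof (A_le_N a (fun _ => true) n). pose proof (Rpower_pos' (INR (S n)) a).
  unfold N_alpha in *; lra.
Qed.

Lemma ratio_bounds a A n : (1 <= n)%nat -> 0 <= dens_ratio a A n <= 1.
Proof.
  intros H. unfold dens_ratio. pose proof (N_pos a n H). pose proof (A_le_N a A n).
  split; [apply Rmult_le_pos; [lra| left; apply Rinv_0_lt_compat; lra]|].
  apply Rmult_le_reg_r with (N_alpha a n); [lra|].
  field_simplify; lra.
Qed.

Lemma step_bound a A n : (1 <= n)%nat ->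
  Rabs (dens_ratio a A (S n) - dens_ratio a A n) <=
  Rpower (INR (S n)) a / N_alpha a (S n).
Proof.
  intros H. unfold dens_ratio. rewrite N_S, A_S.
  pose proof (N_pos a n H) as HN. pose proof (A_le_N a A n) as HA.
  pose proof (Rpower_pos' (INR (S n)) a) as Hw.
  set (N := N_alpha a n) in *. set (w := Rpower (INR (S n)) a) in *.
  set (b := if A (S n) then w else 0).
  assert (Hb : 0 <= b <= w) by (unfold b; destruct (A (S n)); lra).
  set (c := A_alpha a A n) in *.
  replace ((c + b) / (N + w) - c / N) with ((b * N - c * w) / (N * (N + w))) by (field; lra).
  unfold Rdiv. rewrite Rabs_mult, Rabs_inv.
  rewrite (Rabs_right (N * (N+w))) by nra.
  apply Rmult_le_reg_r with (N * (N + w)); [nra|].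
  rewrite Rmult_assoc, Rinv_l by nra.
  replace (w * / (N + w) * (N * (N + w))) with (w * N) by (field; lra).
  rewrite Rmult_1_r. apply Rabs_le; nra.
Qed.

Lemma exp_le' x y : x <= y -> exp x <= exp y.
Proof. intros [H|H]; [left; apply exp_increasing; auto| subst; lra]. Qed.

Lemma Rpower_anti a x y : a <= 0 -> 0 < x <= y -> Rpower y a <= Rpower x a.
Proof.
  intros Ha Hxy. unfold Rpower. apply exp_le'.
  apply Rmult_le_compat_neg_l; [auto| apply ln_le; lra].
Qed.

Lemma N_ge_neg a n : a <= 0 -> INR n * Rpower (INR n) a <= N_alpha a n.
Proof.
  intros Ha. induction n as [|n IH]; [simpl; unfold N_alpha; simpl; lra|].
  rewrite N_S.
  assert (Hm : INR n * Rpower (INR (S n)) a <= INR n * Rpower (INR n) a).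
  { destruct n as [|n]; [simpl; lra|].
    apply Rmult_le_compat_l; [apply pos_INR|].
    apply Rpower_anti; auto. split; [apply lt_0_INR; lia| apply le_INR; lia]. }
  rewrite (S_INR n) at 1. lra.
Qed.

Lemma N_split a p j : 0 <= a ->
  N_alpha a p + INR j * Rpower (INR (p + 1)) a <= N_alpha a (p + j).
Proof.
  intros Ha. induction j as [|j IH]; [rewrite Nat.add_0_r; simpl; lra|].
  rewrite (Nat.add_succ_r p j), N_S, (S_INR j).
  assert (Rpower (INR (p+1)) a <= Rpower (INR (S (p + j))) a).
  { apply Rle_Rpower_l; auto. split; [apply lt_0_INR; lia| apply le_INR; lia]. }
  lra.
Qed.

Lemma N_ge_pos a n j : 0 <= a -> (2 * j <= n)%nat ->
  INR j * (Rpower (INR n) a * Rpower (/2) a) <= N_alpha a n.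
Proof.
  intros Ha Hj. destruct (Nat.eq_dec n 0) as [->|Hn].
  { assert (j = 0%nat) by lia. subst. simpl. unfold N_alpha; simpl; lra. }
  pose proof (N_split a (n - j) j Ha) as H. replace (n - j + j)%nat with n in H by lia.
  pose proof (A_le_N a (fun _ => true) (n - j)) as H0. fold (N_alpha a (n-j)) in H0.
  rewrite Rpower_mult_distr; [| apply lt_0_INR; lia| lra].
  assert (Rpower (INR n * / 2) a <= Rpower (INR (n - j + 1)) a).
  { apply Rle_Rpower_l; auto. split.
    - apply Rmult_lt_0_compat; [apply lt_0_INR; lia| lra].
    - rewrite plus_INR, minus_INR by lia. simpl.
      apply le_INR in Hj. rewrite mult_INR in Hj. simpl in Hj. lra. }
  pose proof (pos_INR j).
  assert (INR j * Rpower (INR n * / 2) a <= INR j * Rpower (INR (n - j + 1)) a) by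
    (apply Rmult_le_compat_l; lra).
  lra.
Qed.

Lemma weight_small a eps : 0 < eps -> exists M, forall n, (M <= n)%nat ->
  Rpower (INR n) a / N_alpha a n < eps.
Proof.
  intros He. destruct (Rle_lt_dec a 0) as [Ha|Ha].
  - destruct (INR_unbounded (/ eps)) as [K HK].
    exists (S K). intros n Hn.
    pose proof (N_ge_neg a n Ha). pose proof (Rpower_pos' (INR n) a).
    assert (HnK : INR K < INR n) by (apply lt_INR; lia).
    assert (0 < /eps) by (apply Rinv_0_lt_compat; auto).
    pose proof (N_pos a n ltac:(lia)).
    apply Rmult_lt_reg_r with (N_alpha a n); auto.
    unfold Rdiv. rewrite Rmult_assoc, Rinv_l by lra. rewrite Rmult_1_r.
    apply Rlt_le_trans with (eps * (INR n * Rpower (INR n) a)); [|nra].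
    assert (1 < eps * INR n).
    { replace 1 with (/eps*eps) by (field; lra). rewrite (Rmult_comm eps).
      apply Rmult_lt_compat_r; lra. }
    nra.
  - set (h := Rpower (/2) a). assert (Hh : 0 < h) by apply Rpower_pos'.
    destruct (INR_unbounded (/ (eps * h))) as [K HK].
    exists (S (2 * S K)). intros n Hn.
    pose proof (N_ge_pos a n (S K) (Rlt_le _ _ Ha) ltac:(lia)) as HN. fold h in HN.
    pose proof (Rpower_pos' (INR n) a) as Hw.
    pose proof (N_pos a n ltac:(lia)).
    assert (0 < eps * h) by nra.
    assert (0 < /(eps * h)) by (apply Rinv_0_lt_compat; auto).
    assert (HK' : / (eps * h) < INR (S K)) by (rewrite S_INR; lra).
    assert (1 < INR (S K) * (eps * h)).
    { replace 1 with (/(eps*h)*(eps*h)) by (field; lra).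
      apply Rmult_lt_compat_r; auto. }
    apply Rmult_lt_reg_r with (N_alpha a n); auto.
    unfold Rdiv. rewrite Rmult_assoc, Rinv_l by lra. rewrite Rmult_1_r.
    apply Rlt_le_trans with (eps * (INR (S K) * (Rpower (INR n) a * h))); [|nra].
    nra.
Qed.

Lemma step_small a A eps : 0 < eps -> exists M, forall n, (M <= n)%nat ->
  Rabs (dens_ratio a A (S n) - dens_ratio a A n) < eps.
Proof.
  intros He. destruct (weight_small a eps He) as [M HM].
  exists (S M). intros n Hn.
  eapply Rle_lt_trans; [apply step_bound; lia|]. apply HM; lia.
Qed.

Lemma below_often u x : Rbar_le (LimInf_seq u) (Finite x) ->
  forall eps, 0 < eps -> forall N, exists n, (N <= n)%nat /\ u n < x + eps.
Proof.
  intros H eps He N. destruct (ex_LimInf_seq u) as [l Hl].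
  rewrite (is_LimInf_seq_unique _ _ Hl) in H.
  destruct l as [l| |]; simpl in H, Hl.
  - destruct (Hl (mkposreal eps He)) as [H1 _]. destruct (H1 N) as [n [Hn Hu]].
    exists n; simpl in Hu; split; auto; lra.
  - contradiction.
  - destruct (Hl (x + eps) N) as [n [Hn Hu]]. exists n; auto.
Qed.

Lemma above_often u x : Rbar_le (Finite x) (LimSup_seq u) ->
  forall eps, 0 < eps -> forall N, exists n, (N <= n)%nat /\ x - eps < u n.
Proof.
  intros H eps He N. destruct (ex_LimSup_seq u) as [l Hl].
  rewrite (is_LimSup_seq_unique _ _ Hl) in H.
  destruct l as [l| |]; simpl in H, Hl.
  - destruct (Hl (mkposreal eps He)) as [H1 _]. destruct (H1 N) as [n [Hn Hu]].
    exists n; simpl in Hu; split; auto; lra.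
  - destruct (Hl (x - eps) N) as [n [Hn Hu]]. exists n; auto.
  - contradiction.
Qed.

Lemma crossing (P : nat -> Prop) n d : ~ P n -> P (n + d)%nat ->
  exists k, (n <= k)%nat /\ ~ P k /\ P (S k).
Proof.
  intros H0. induction d as [|d IH]; intros Hd.
  - rewrite Nat.add_0_r in Hd. contradiction.
  - destruct (classic (P (n + d)%nat)) as [Hp|Hp].
    + apply IH; auto.
    + exists (n + d)%nat. split; [lia|]. split; auto.
      rewrite <- Nat.add_succ_r; auto.
Qed.

Lemma cluster a A x :
  Rbar_le (lower_dens a A) (Finite x) -> Rbar_le (Finite x) (upper_dens a A) ->
  forall eps, 0 < eps -> forall m, exists n, le m n /\ Rabs (dens_ratio a A n - x) < eps.
Proof.
  intros hlo hhi eps He m. set (r := dens_ratio a A).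
  destruct (step_small a A eps He) as [M HM].
  destruct (below_often r x hlo eps He (max m M)) as [n1 [Hn1 H1]].
  destruct (Rlt_le_dec (x - eps) (r n1)) as [H2|H2].
  { exists n1. split; [lia|]. apply Rabs_def1; lra. }
  destruct (above_often r x hhi eps He n1) as [n2 [Hn2 H3]].
  destruct (crossing (fun k => x - eps < r k) n1 (n2 - n1)) as [k [Hk [Hk1 Hk2]]].
  - lra.
  - replace (n1 + (n2 - n1))%nat with n2 by lia. auto.
  - exists (S k). split; [lia|].
    pose proof (HM k ltac:(lia)) as Hs. fold r in Hs.
    apply Rnot_lt_le in Hk1.
    apply Rabs_def2 in Hs. apply Rabs_def1; lra.
Qed.
From mathcomp Require Import ssreflect ssrfun ssrbool.
From mathcomp Require Import boolp classical_sets filter.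
Open Scope R_scope.

Lemma ultra_exists (r : nat -> R) (x : R)
  (hcl : forall eps, 0 < eps -> forall m, exists n, le m n /\ Rabs (r n - x) < eps) :
  exists F, is_free_ultrafilter F /\ is_F_lim F r x.
Proof.
pose G := fun S : nat -> Prop => exists eps, 0 < eps /\ exists m, forall n, le m n -> Rabs (r n - x) < eps -> S n.
have GF : Filter G.
  split.
  - by exists 1; split; [lra|exists O => n _ _; exact I].
  - move=> A B [e1 [h1 [m1 H1]]] [e2 [h2 [m2 H2]]].
    exists (Rmin e1 e2); split; first by apply: Rmin_pos.
    exists (max m1 m2) => n hn hr; split.
    + apply: H1; [lia| have := Rmin_l e1 e2; lra].
    + apply: H2; [lia| have := Rmin_r e1 e2; lra].
  - move=> A B AB [e [he [m H]]]; exists e; split => //; exists m => n hn hr.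
    exact: AB (H n hn hr).
have GP : ProperFilter G.
  apply: Build_ProperFilter_ex => // P [e [he [m H]]].
  have [n [hn hr]] := hcl e he m; by exists n; apply: H.
have [U [UU GU]] := ultraFilterLemma GP.
have UF : Filter U by exact: filter_filter.
have NE : ~ U set0 by exact: (@filter_not_empty _ U (@ultra_proper _ _ UU)).
exists U; split; last first.
  move=> eps he; apply: GU; exists eps; split => //; exists O => n _ h; exact h.
split; last first.
  move=> m Um.
  have Gm : U (fun n => le (S m) n).
    by apply: GU; exists 1; split; [lra|exists (S m) => n hn _].
  apply: NE.
  apply: (filterS _ (filterI Um Gm)) => n /= [-> h]; lia.
split; first exact: filterT.
split; first exact: NE.
split; first by move=> S T US ST; apply: filterS US.
split; first by move=> S T US UT; apply: filterI.
move=> S; exact: in_ultra_setVsetC.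
Qed.

Theorem corollary4p2 (A : nat -> bool) (alpha : R) (halpha : -1 <= alpha) (x : R)
  (hlo : Rbar_le (lower_dens alpha A) (Finite x))
  (hhi : Rbar_le (Finite x) (upper_dens alpha A)) :
  exists F : (nat -> Prop) -> Prop,
    is_free_ultrafilter F /\ mu_alpha_F_is alpha F A x.
Proof.
  exact (ultra_exists (dens_ratio alpha A) x (cluster alpha A x hlo hhi)).
Qed.
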